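(* For all integers $s\geq 2$ and $t\geq 1$, $$(-1)^t\sigma(s,t)=\sum_{i=0}^{s-2}2^{i}\binom{t+i-1}{i}\sigma(s-i,t+i)+(-1)^t2^s\sum_{j=0}^{t-2}(-1)^j\binom{s+j-1}{j}\lambda(s+j)\lambda(t-j)$$ $$\qquad-2^{s-1}\binom{s+t-2}{s-1}\sum_{p\geq 1}\frac{H_p}{(2p+1)^{s+t-1}}-2^s\binom{s+t-2}{s-1}\lambda(s+t-1)\ln 2,$$ where an empty sum equals $0$.
   Context: $H_p=1+\frac12+\cdots+\frac1p$. For integers $t\geq 1$, $n\geq 1$ let $S_n^{(t)}=\sum_{k=1}^{n}\frac{1}{(2k-1)^t}$, and for integers $s\geq 2$, $t\geq 1$ let $\sigma(s,t)=\sum_{n\geq 1}\frac{S_n^{(t)}}{n^s}$. For real $s>1$, $\lambda(s)=\sum_{n\geq 1}\frac{1}{(2n-1)^s}$. *)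

(* Defs.v *)
From Stdlib Require Import Reals.
From Coquelicot Require Import Coquelicot.
Open Scope R_scope.

Fixpoint rsum (n : nat) (f : nat -> R) : R :=
  match n with
  | O => 0
  | S m => rsum m f + f m
  end.

Definition H (p : nat) : R := rsum p (fun k => / INR (k + 1)).

(* S_n^{(t)} = sum_{k=1}^n 1/(2k-1)^t. *)
Definition Sodd (t n : nat) : R := rsum n (fun k => / (INR (2 * k + 1)) ^ t).

(* sigma(s,t) = sum_{n>=1} S_n^{(t)} / n^s. *)
Definition sigmaST (s t : nat) : R :=
  Series (fun n => Sodd t (n + 1) / (INR (n + 1)) ^ s).

(* lambda(s) = sum_{n>=1} 1/(2n-1)^s  (only needed at integer s). *)
Definition lambda (s : nat) : R :=
  Series (fun n => / (INR (2 * n + 1)) ^ s).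

(* Main.v *)
Require Import Defs.
From Stdlib Require Import Reals Lra Lia.
From Coquelicot Require Import Coquelicot.
Open Scope R_scope.

Lemma rsum_sum_n (f : nat -> R) N : sum_n f N = rsum (S N) f.
Proof.
  induction N as [|N IH].
  - rewrite sum_O. simpl. ring.
  - rewrite sum_Sn, IH. simpl. unfold plus; simpl. ring.
Qed.

Lemma rsum_ext n f g : (forall k, (k < n)%nat -> f k = g k) -> rsum n f = rsum n g.
Proof.
  induction n as [|n IH]; intros Hfg; simpl; auto.
  rewrite IH by (intros; apply Hfg; lia). rewrite Hfg by lia. auto.
Qed.

Lemma rsum_plus n f g : rsum n (fun k => f k + g k) = rsum n f + rsum n g.
Proof. induction n; simpl; try rewrite IHn; ring. Qed.

Lemma rsum_scal n c f : rsum n (fun k => c * f k) = c * rsum n f.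
Proof. induction n; simpl; try rewrite IHn; ring. Qed.

Lemma rsum_shift n f : rsum (S n) f = f 0%nat + rsum n (fun k => f (S k)).
Proof. induction n; simpl in *; try rewrite IHn; ring. Qed.

Lemma rsum_le n f g : (forall k, (k < n)%nat -> f k <= g k) -> rsum n f <= rsum n g.
Proof.
  induction n as [|n IH]; intros Hfg; simpl. lra.
  assert (rsum n f <= rsum n g) by (apply IH; intros; apply Hfg; lia).
  specialize (Hfg n ltac:(lia)). lra.
Qed.

Lemma rsum_nonneg n f : (forall k, (k < n)%nat -> 0 <= f k) -> 0 <= rsum n f.
Proof.
  intros H. replace 0 with (rsum n (fun _ => 0)). apply rsum_le; auto.
  induction n; simpl; auto. rewrite IHn; [ring|]. intros; apply H; lia.
Qed.

Lemma rsum_mono n m f : (forall k, 0 <= f k) -> (n <= m)%nat -> rsum n f <= rsum m f.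
Proof.
  intros Hf Hnm. induction Hnm. lra. simpl. specialize (Hf m). lra.
Qed.

Lemma rsum_split n m f : rsum (n + m) f = rsum n f + rsum m (fun k => f (n + k)%nat).
Proof.
  induction m; simpl. rewrite Nat.add_0_r; ring.
  rewrite Nat.add_succ_r. simpl. rewrite IHm. ring.
Qed.

Lemma ex_series_bound (a : nat -> R) (B : R) :
  (forall n, 0 <= a n) -> (forall N, rsum N a <= B) -> ex_series a /\ Series a <= B.
Proof.
  intros Ha HB.
  destruct (ex_finite_lim_seq_incr (sum_n a) B) as [l Hl].
  - intros n. rewrite !rsum_sum_n. simpl. specialize (Ha (S n)). lra.
  - intros n. rewrite rsum_sum_n. apply HB.
  - split. exists l. exact Hl.
    unfold Series. rewrite (is_lim_seq_unique _ _ Hl). simpl.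
    assert (Hle := is_lim_seq_le _ _ _ _ (fun n => (eq_ind _ (fun x => x <= B) (HB (S n)) _ (eq_sym (rsum_sum_n a n)))) Hl (is_lim_seq_const B)).
    simpl in Hle. exact Hle.
Qed.

Lemma rsum_le_Series (a : nat -> R) N :
  (forall n, 0 <= a n) -> ex_series a -> rsum N a <= Series a.
Proof.
  intros Ha [l Hl]. rewrite (is_series_unique _ _ Hl).
  assert (Hl' : is_lim_seq (fun n => sum_n a (n + N)) l).
  { apply (is_lim_seq_incr_n (sum_n a) N l). exact Hl. }
  assert (Hp : forall n, rsum N a <= sum_n a (n + N)).
  { intros n. rewrite rsum_sum_n. apply rsum_mono; auto. lia. }
  assert (Hle := is_lim_seq_le (fun _ => rsum N a) _ _ _ 
    Hp (is_lim_seq_const _) Hl'). simpl in Hle. exact Hle.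
Qed.

Lemma term_le_Series (a : nat -> R) k :
  (forall n, 0 <= a n) -> ex_series a -> a k <= Series a.
Proof.
  intros Ha He. eapply Rle_trans; [|apply (rsum_le_Series a (S k)); auto].
  simpl. assert (0 <= rsum k a) by (apply rsum_nonneg; auto). lra.
Qed.

Lemma Series_nonneg (a : nat -> R) : (forall n, 0 <= a n) -> 0 <= Series a.
Proof.
  intros Ha. unfold Series.
  assert (H := Lim_seq_le_loc (fun _ => 0) (sum_n a)).
  rewrite Lim_seq_const in H.
  destruct (Lim_seq (sum_n a)) eqn:E; simpl; try lra.
  apply H. exists 0%nat. intros n _. rewrite rsum_sum_n. apply rsum_nonneg. auto.
Qed.
Definition summable (F : nat -> nat -> R) :=
  (forall k, ex_series (F k)) /\ ex_series (fun k => Series (F k)).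
Definition DS (F : nat -> nat -> R) := Series (fun k => Series (F k)).

Lemma is_series_zero : is_series (fun _ : nat => 0) 0.
Proof.
  assert (H : is_lim_seq (sum_n (fun _ : nat => 0)) 0).
  { apply (is_lim_seq_ext (fun _ => 0)). intros n. rewrite rsum_sum_n.
    induction n; simpl in *. ring. rewrite <- IHn. ring.
    apply is_lim_seq_const. }
  exact H.
Qed.

Lemma Series_rsum (G : nat -> nat -> R) K :
  (forall j, (j < K)%nat -> ex_series (G j)) ->
  ex_series (fun m => rsum K (fun j => G j m)) /\
  Series (fun m => rsum K (fun j => G j m)) = rsum K (fun j => Series (G j)).
Proof.
  induction K as [|K IH]; intros HG; simpl.
  - split. exists 0. apply (is_series_ext (fun _ => 0)). auto.
    apply is_series_zero.
    apply (is_series_unique (fun _ : nat => 0) 0). apply is_series_zero.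
  - destruct IH as [IH1 IH2]. intros; apply HG; lia.
    assert (HK := HG K ltac:(lia)). split.
    + apply (ex_series_plus _ _ IH1 HK).
    + rewrite Series_plus; auto. rewrite IH2. auto.
Qed.

Lemma norm_R (x : R) : norm x = Rabs x.
Proof. reflexivity. Qed.

Lemma ex_series_le_R (a b : nat -> R) :
  (forall n, 0 <= a n <= b n) -> ex_series b -> ex_series a.
Proof.
  intros H Hb. apply (@ex_series_le R_AbsRing R_CompleteNormedModule a b); auto.
  intros n. rewrite norm_R, Rabs_pos_eq; apply H.
Qed.

Lemma tonelli_le (F : nat -> nat -> R) :
  (forall k m, 0 <= F k m) -> summable F ->
  summable (fun k m => F m k) /\ DS (fun k m => F m k) <= DS F.
Proof.
  intros Hpos [H1 H2].
  assert (E1 : forall k, ex_series (fun m => F m k)).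
  { intros k. apply (ex_series_le_R _ (fun m => Series (F m))); auto.
    intros m. split; auto. apply term_le_Series; auto. }
  assert (Hb : forall N, rsum N (fun k => Series (fun m => F m k)) <= DS F).
  { intros N. destruct (Series_rsum (fun k m => F m k) N) as [_ E].
    { intros; auto. }
    rewrite <- E. unfold DS. apply Series_le; auto.
    intros m. split. apply rsum_nonneg; auto.
    apply rsum_le_Series; auto. }
  destruct (ex_series_bound _ _ (fun k => Series_nonneg _ (fun m => Hpos m k)) Hb) as [E2 E3].
  split; [split|]; auto.
Qed.

Lemma tonelli (F : nat -> nat -> R) :
  (forall k m, 0 <= F k m) -> summable F ->
  summable (fun k m => F m k) /\ DS (fun k m => F m k) = DS F.
Proof.
  intros Hpos HF. destruct (tonelli_le F Hpos HF) as [HS Hle].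
  destruct (tonelli_le (fun k m => F m k) (fun k m => Hpos m k) HS) as [_ Hle2].
  split; auto. apply Rle_antisym; auto.
Qed.

Lemma summable_plus F G : summable F -> summable G ->
  summable (fun k m => F k m + G k m) /\ DS (fun k m => F k m + G k m) = DS F + DS G.
Proof.
  intros [F1 F2] [G1 G2].
  assert (E : forall k, Series (fun m => F k m + G k m) = Series (F k) + Series (G k)).
  { intros; apply Series_plus; auto. }
  split; [split|].
  - intros k. apply (ex_series_plus _ _ (F1 k) (G1 k)).
  - apply (ex_series_ext (fun k => Series (F k) + Series (G k))). intros; auto.
    apply (ex_series_plus _ _ F2 G2).
  - unfold DS. rewrite (Series_ext _ _ E). apply Series_plus; auto.
Qed.

Lemma summable_scal c F : summable F ->
  summable (fun k m => c * F k m) /\ DS (fun k m => c * F k m) = c * DS F.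
Proof.
  intros [F1 F2].
  assert (E : forall k, Series (fun m => c * F k m) = c * Series (F k)).
  { intros; apply Series_scal_l. }
  split; [split|].
  - intros k. apply (ex_series_scal_l c _ (F1 k)).
  - apply (ex_series_ext (fun k => c * Series (F k))). intros; auto.
    apply (ex_series_scal_l c _ F2).
  - unfold DS. rewrite (Series_ext _ _ E). apply Series_scal_l.
Qed.

Lemma summable_ext F G : (forall k m, F k m = G k m) -> summable F ->
  summable G /\ DS G = DS F.
Proof.
  intros E [F1 F2].
  assert (E2 : forall k, Series (G k) = Series (F k)).
  { intros; apply Series_ext; auto. }
  split; [split|].
  - intros k. apply (ex_series_ext (F k)); auto.
  - apply (ex_series_ext (fun k => Series (F k))); auto.
  - unfold DS. apply Series_ext; auto.
Qed.

Lemma summable_rsum (F : nat -> nat -> nat -> R) J :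
  (forall j, (j < J)%nat -> summable (F j)) ->
  summable (fun k m => rsum J (fun j => F j k m)) /\
  DS (fun k m => rsum J (fun j => F j k m)) = rsum J (fun j => DS (F j)).
Proof.
  induction J as [|J IH]; intros HF; simpl.
  - assert (Z : Series (fun _ : nat => 0) = 0).
    { apply (is_series_unique (fun _ : nat => 0) 0), is_series_zero. }
    split; [split|].
    + intros k. exists 0. apply is_series_zero.
    + apply (ex_series_ext (fun _ => 0)). intros; rewrite Z; auto.
      exists 0. apply is_series_zero.
    + unfold DS. rewrite (Series_ext _ (fun _ => 0)). apply Z. intros; apply Z.
  - destruct IH as [IH1 IH2]. intros; apply HF; lia.
    destruct (summable_plus _ _ IH1 (HF J ltac:(lia))) as [P1 P2].
    split; auto. rewrite P2, IH2. auto.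
Qed.

Lemma summable_prod (a b : nat -> R) : ex_series a -> ex_series b ->
  summable (fun k m => a k * b m) /\ DS (fun k m => a k * b m) = Series a * Series b.
Proof.
  intros Ha Hb.
  assert (E : forall k, Series (fun m => a k * b m) = a k * Series b).
  { intros; apply Series_scal_l. }
  split; [split|].
  - intros k. apply (ex_series_scal_l (a k) _ Hb).
  - apply (ex_series_ext (fun k => a k * Series b)). intros; auto.
    apply ex_series_scal_r; auto.
  - unfold DS. rewrite (Series_ext _ _ E). apply Series_scal_r.
Qed.

Lemma summable_bound (F : nat -> nat -> R) (b : nat -> R) :
  (forall k m, 0 <= F k m) -> (forall k N, rsum N (F k) <= b k) -> ex_series b ->
  summable F.
Proof.
  intros Hpos Hb Eb.
  assert (H : forall k, ex_series (F k) /\ Series (F k) <= b k).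
  { intros k. apply ex_series_bound; auto. }
  split. intros k; apply H.
  apply (ex_series_le_R _ b); auto. intros k.
  split. apply Series_nonneg; auto. apply H.
Qed.
Fixpoint cb (n k : nat) : R :=
  match n, k with
  | _, O => 1
  | O, S _ => 0
  | S n', S k' => cb n' k' + cb n' (S k')
  end.

Lemma cb_0 n : cb n 0 = 1.
Proof. destruct n; reflexivity. Qed.

Lemma cb_gt n k : (n < k)%nat -> cb n k = 0.
Proof.
  revert k. induction n; intros k Hk; destruct k; try lia; simpl; auto.
  rewrite !IHn by lia. ring.
Qed.

Lemma C_n_0' n : Binomial.C n 0 = 1.
Proof. unfold Binomial.C. rewrite Nat.sub_0_r. simpl. field. apply INR_fact_neq_0. Qed.

Lemma C_n_n' n : Binomial.C n n = 1.
Proof. unfold Binomial.C. rewrite Nat.sub_diag. simpl. field. apply INR_fact_neq_0. Qed.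

Lemma cb_C n k : (k <= n)%nat -> cb n k = Binomial.C n k.
Proof.
  revert k. induction n; intros k Hk.
  - destruct k; try lia. simpl. rewrite C_n_0'. auto.
  - destruct k. rewrite cb_0, C_n_0'. auto.
    simpl. destruct (Nat.eq_dec k n).
    + subst. rewrite (cb_gt n (S n)) by lia. rewrite IHn by lia. rewrite !C_n_n'. ring.
    + rewrite !IHn by lia. apply pascal. lia.
Qed.

Section PF.
Variables u v e : R.
Hypothesis Huv : u * v = e * (u - v).

Definition PA t s := rsum t (fun j => (-1) ^ j * cb (s + j - 1) j * e ^ (s + j) * u ^ (t - j)).
Definition PB t s := rsum s (fun i => cb (t + i - 1) i * e ^ (t + i) * v ^ (s - i)).

Lemma rsum_zero n f : (forall k, (k < n)%nat -> f k = 0) -> rsum n f = 0.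
Proof.
  intros H. induction n; simpl; auto. rewrite IHn. rewrite H by lia. ring.
  intros; apply H; lia.
Qed.

Lemma PA_rec t s : e * PA (S t) s - e * PA t (S s) = PA (S t) (S s).
Proof.
  unfold PA. rewrite !rsum_shift. rewrite <- !rsum_scal.
  simpl (S t - 0)%nat. rewrite !Nat.add_0_r.
  assert (E : rsum t (fun k => e * ((-1) ^ S k * cb (s + S k - 1) (S k) * e ^ (s + S k) * u ^ (S t - S k))) -
     rsum t (fun k => e * ((-1) ^ k * cb (S s + k - 1) k * e ^ (S s + k) * u ^ (t - k))) =
     rsum t (fun k => (-1) ^ S k * cb (S s + S k - 1) (S k) * e ^ (S s + S k) * u ^ (S t - S k))).
  { assert (E2 : forall a b c, a - b = c <-> a = c + b) by (intros; split; intros; lra).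
    apply E2. rewrite <- rsum_plus. apply rsum_ext. intros k _.
    replace (s + S k - 1)%nat with (s + k)%nat by lia.
    replace (S s + k - 1)%nat with (s + k)%nat by lia.
    replace (S s + S k - 1)%nat with (S (s + k))%nat by lia.
    replace (s + S k)%nat with (S (s + k))%nat by lia.
    replace (S s + S k)%nat with (S (S (s + k)))%nat by lia.
    replace (S s + k)%nat with (S (s + k))%nat by lia.
    simpl (S t - S k)%nat. simpl cb. simpl pow. generalize ((-1)^k) (e^(s+k)) (u^(t-k)) (cb (s+k) k) (cb (s+k) (S k)). intros; ring. }
  rewrite <- E. rewrite !cb_0. rewrite Rmult_plus_distr_l, <- rsum_scal. simpl pow. ring.
Qed.

Lemma PB_rec t s : e * PB (S t) s + e * PB t (S s) = PB (S t) (S s).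
Proof.
  unfold PB. rewrite !rsum_shift. rewrite !cb_0.
  rewrite Rmult_plus_distr_l, <- !rsum_scal.
  assert (E : rsum s (fun k => e * (cb (S t + k - 1) k * e ^ (S t + k) * v ^ (s - k))) +
     rsum s (fun k => e * (cb (t + S k - 1) (S k) * e ^ (t + S k) * v ^ (S s - S k))) =
     rsum s (fun k => cb (S t + S k - 1) (S k) * e ^ (S t + S k) * v ^ (S s - S k))).
  { rewrite <- rsum_plus. apply rsum_ext. intros k _.
    replace (S t + k - 1)%nat with (t + k)%nat by lia.
    replace (t + S k - 1)%nat with (t + k)%nat by lia.
    replace (S t + S k - 1)%nat with (S (t + k))%nat by lia.
    replace (t + S k)%nat with (S (t + k))%nat by lia.
    replace (S t + S k)%nat with (S (S (t + k)))%nat by lia.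
    replace (S t + k)%nat with (S (t + k))%nat by lia.
    simpl (S s - S k)%nat. simpl cb. simpl pow.
    generalize (e^(t+k)) (v^(s-k)) (cb (t+k) k) (cb (t+k) (S k)). intros; ring. }
  rewrite <- E. rewrite !Nat.add_0_r. simpl (S s - 0)%nat. simpl pow. ring.
Qed.

Lemma PF_ind n : forall t s, (t + s = n)%nat -> (1 <= n)%nat ->
  u ^ t * v ^ s = PA t s + (-1) ^ t * PB t s.
Proof.
  induction n as [|n IH]; intros t s Hn H1; [lia|].
  destruct t as [|t].
  -
    simpl in Hn. subst s. unfold PA, PB. simpl rsum at 1.
    rewrite rsum_shift. rewrite (rsum_zero n). simpl. ring.
    intros k _. rewrite (cb_gt (0 + S k - 1) (S k)) by lia. ring.
  - destruct s as [|s].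
    + assert (t = n) by lia. subst t. unfold PA, PB. simpl rsum at 2.
      rewrite rsum_shift. rewrite (rsum_zero n). simpl. ring.
      intros k _. rewrite (cb_gt (0 + S k - 1) (S k)) by lia. ring.
    + assert (Hn1 : (1 <= n)%nat) by lia.
      assert (E1 := IH (S t) s ltac:(lia) Hn1).
      assert (E2 := IH t (S s) ltac:(lia) Hn1).
      assert (Hr : u ^ S t * v ^ S s = e * (u ^ S t * v ^ s - u ^ t * v ^ S s)).
      { simpl. replace (u * u ^ t * (v * v ^ s)) with ((u * v) * (u ^ t * v ^ s)) by ring.
        rewrite Huv. ring. }
      rewrite Hr, E1, E2. rewrite <- PA_rec, <- PB_rec. simpl pow.
      generalize ((-1)^t). intros. ring.
Qed.
End PF.

Definition xk (k : nat) : R := INR (2 * k + 1).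
Definition yk (k m : nat) : R := INR (2 * k + 2 * m + 2).

Lemma xk_ge1 k : 1 <= xk k.
Proof. unfold xk. rewrite plus_INR, mult_INR. simpl. pose proof (pos_INR k). lra. Qed.

Lemma xk_pos k : 0 < xk k.
Proof. pose proof (xk_ge1 k). lra. Qed.

Lemma yk_eq k m : yk k m = xk k + xk m.
Proof. unfold yk, xk. rewrite !plus_INR, !mult_INR. simpl. ring. Qed.

Lemma yk_sym k m : yk k m = yk m k.
Proof. rewrite !yk_eq. ring. Qed.

Lemma yk_pos k m : 0 < yk k m.
Proof. rewrite yk_eq. pose proof (xk_pos k). pose proof (xk_pos m). lra. Qed.

Lemma inv_pow_nonneg x p : 0 < x -> 0 <= / x ^ p.
Proof. intros. apply Rlt_le, Rinv_0_lt_compat, pow_lt; auto. Qed.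

Lemma inv_pow_le x p q : 1 <= x -> (q <= p)%nat -> / x ^ p <= / x ^ q.
Proof.
  intros Hx Hpq. apply Rinv_le_contravar. apply pow_lt; lra.
  apply Rle_pow; auto.
Qed.

Lemma rsum_tele N g : rsum N (fun m => g m - g (S m)) = g 0%nat - g N.
Proof. induction N; simpl; try rewrite IHN; ring. Qed.

Lemma tele12 N : rsum N (fun n => / ((INR n + 1) * (INR n + 2))) = 1 - / (INR N + 1).
Proof.
  rewrite (rsum_ext _ _ (fun n => / (INR n + 1) - / (INR (S n) + 1))).
  rewrite rsum_tele. simpl. field. pose proof (pos_INR N); lra.
  intros n _. rewrite S_INR. pose proof (pos_INR n). field. lra.
Qed.

Lemma ex_tele12 : ex_series (fun n => / ((INR n + 1) * (INR n + 2))).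
Proof.
  apply (ex_series_bound _ 1).
  intros n. pose proof (pos_INR n). apply Rlt_le, Rinv_0_lt_compat. nra.
  intros N. rewrite tele12. pose proof (pos_INR N).
  assert (0 < / (INR N + 1)) by (apply Rinv_0_lt_compat; lra). lra.
Qed.

Lemma xk2_bound k : / xk k ^ 2 <= 2 * / ((INR k + 1) * (INR k + 2)).
Proof.
  unfold xk. rewrite plus_INR, mult_INR. simpl. pose proof (pos_INR k).
  rewrite <- (Rmult_1_r 2) at 1. unfold Rdiv.
  replace (2 * 1 * / ((INR k + 1) * (INR k + 2))) with (/ (((INR k + 1) * (INR k + 2)) / 2)) by (field; nra).
  apply Rinv_le_contravar. nra. nra.
Qed.

Lemma ex_lam p : (2 <= p)%nat -> ex_series (fun n => / xk n ^ p).
Proof.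
  intros Hp. apply (ex_series_le_R _ (fun n => 2 * / ((INR n + 1) * (INR n + 2)))).
  intros n. split. apply inv_pow_nonneg, xk_pos.
  eapply Rle_trans. apply inv_pow_le; [apply xk_ge1|exact Hp]. apply xk2_bound.
  apply (ex_series_scal_l 2 _ ex_tele12).
Qed.

Lemma lambda_xk p : lambda p = Series (fun n => / xk n ^ p).
Proof. reflexivity. Qed.

Lemma ln_le_lin z : 0 < z -> ln z <= z - 1.
Proof.
  intros Hz. pose proof (exp_ineq1_le (z - 1)).
  rewrite <- (ln_exp (z - 1)). apply ln_le; auto. lra.
Qed.

Lemma ln_step_up x : 0 < x -> ln (x + 1) - ln x <= / x.
Proof.
  intros Hx. rewrite <- ln_div by lra.
  eapply Rle_trans. apply ln_le_lin. apply Rdiv_lt_0_compat; lra.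
  right. field. lra.
Qed.

Lemma ln_step_down x : 1 < x -> / x <= ln x - ln (x - 1).
Proof.
  intros Hx.
  assert (H := ln_le_lin ((x - 1) / x) ltac:(apply Rdiv_lt_0_compat; lra)).
  rewrite ln_div in H by lra.
  replace ((x - 1) / x - 1) with (- / x) in H by (field; lra). lra.
Qed.

Lemma H_S n : H (S n) = H n + / INR (S n).
Proof. unfold H. simpl. rewrite Nat.add_1_r. auto. Qed.

Lemma H_0 : H 0 = 0.
Proof. reflexivity. Qed.

Lemma H_nonneg n : 0 <= H n.
Proof.
  unfold H. apply rsum_nonneg. intros k _. apply Rlt_le, Rinv_0_lt_compat.
  rewrite plus_INR. simpl. pose proof (pos_INR k). lra.
Qed.

Lemma Hdiff_up n j : (1 <= n)%nat -> H (n + j) - H n <= ln (INR (n + j)) - ln (INR n).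
Proof.
  intros Hn. induction j.
  - rewrite Nat.add_0_r. lra.
  - rewrite Nat.add_succ_r, H_S.
    assert (Hx : 1 < INR (S (n + j))).
    { rewrite S_INR, plus_INR. assert (1 <= INR n) by (apply (le_INR 1); auto).
      pose proof (pos_INR j). lra. }
    pose proof (ln_step_down _ Hx). rewrite S_INR in *.
    replace (INR (n + j) + 1 - 1) with (INR (n + j)) in H by ring. lra.
Qed.

Lemma Hdiff_low n j : H (n + j) - H n >= ln (INR (n + j + 1)) - ln (INR (n + 1)).
Proof.
  induction j.
  - rewrite Nat.add_0_r. lra.
  - rewrite Nat.add_succ_r, H_S.
    assert (Hx : 0 < INR (n + j + 1)).
    { rewrite !plus_INR. pose proof (pos_INR n). pose proof (pos_INR j). simpl. lra. }
    pose proof (ln_step_up _ Hx).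
    rewrite ?S_INR, ?plus_INR in *. rewrite ?S_INR, ?plus_INR. simpl (INR 1) in *. simpl (INR 0). rewrite ?Rplus_0_l. lra.
Qed.

Lemma lim_inv_S : is_lim_seq (fun N => / INR (S N)) 0.
Proof.
  assert (H1 : is_lim_seq (fun n => INR (S n)) p_infty).
  { apply (is_lim_seq_incr_1 INR p_infty). apply is_lim_seq_INR. }
  assert (H2 := is_lim_seq_inv _ _ H1 ltac:(discriminate)). simpl in H2. exact H2.
Qed.

Definition b1 (k : nat) : R := / INR (2 * k + 1) - / INR (2 * k + 2).

Lemma b1_partial N : rsum N b1 = H (2 * N) - H N.
Proof.
  induction N. simpl. unfold H. simpl. ring.
  simpl rsum. rewrite IHN.
  replace (2 * S N)%nat with (S (S (2 * N))) by lia. rewrite !H_S.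
  unfold b1. replace (2 * N + 1)%nat with (S (2 * N)) by lia.
  replace (2 * N + 2)%nat with (S (S (2 * N))) by lia.
  rewrite !S_INR, mult_INR. simpl. pose proof (pos_INR N). field. lra.
Qed.

Lemma is_series_b1 : is_series b1 (ln 2).
Proof.
  assert (Hm : is_lim_seq (sum_n b1) (ln 2)).
  { apply (is_lim_seq_le_le (fun N => ln 2 - / INR (S N)) _ (fun _ => ln 2)).
    - intros N. rewrite rsum_sum_n, b1_partial.
      replace (2 * S N)%nat with (S N + S N)%nat by lia.
      assert (Hn : 0 < INR (S N)) by (apply lt_0_INR; lia).
      assert (E2 : INR (S N + S N) = 2 * INR (S N)) by (rewrite plus_INR; ring).
      assert (Hl2 : ln (INR (S N + S N)) = ln 2 + ln (INR (S N))) by (rewrite E2; apply ln_mult; lra).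
      split.
      + pose proof (Hdiff_low (S N) (S N)).
        assert (ln (INR (S N + S N)) <= ln (INR (S N + S N + 1))).
        { apply ln_le. lra. rewrite (plus_INR (S N + S N) 1). simpl (INR 1). lra. }
        pose proof (ln_step_up _ Hn). rewrite (plus_INR (S N) 1) in *. simpl (INR 1) in *. lra.
      + pose proof (Hdiff_up (S N) (S N) ltac:(lia)). lra.
    - replace (ln 2) with (ln 2 - 0) at 1 by ring.
      apply is_lim_seq_minus'. apply is_lim_seq_const. apply lim_inv_S.
    - apply is_lim_seq_const. }
  exact Hm.
Qed.

Lemma rsum_S n f : rsum (S n) f = rsum n f + f n.
Proof. reflexivity. Qed.

Definition gsum (m K : nat) : R := rsum m (fun r => / INR (K + r + 1)).

Lemma gsum_diff m K : gsum m K - gsum m (S K) = / INR (K + 1) - / INR (K + m + 1).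
Proof.
  unfold gsum. induction m.
  - simpl. rewrite Nat.add_0_r. ring.
  - rewrite !rsum_S.
    replace (S K + m + 1)%nat with (K + S m + 1)%nat by lia.
    lra.
Qed.

Lemma gsum_0 m : gsum m 0 = H m.
Proof. unfold gsum, H. apply rsum_ext. intros; reflexivity. Qed.

Lemma rsum_const n c : rsum n (fun _ => c) = INR n * c.
Proof. induction n; simpl rsum; try rewrite IHn; rewrite ?S_INR; simpl; ring. Qed.

Lemma gsum_bound m K : 0 <= gsum m K <= INR m * / INR (S K).
Proof.
  unfold gsum. split.
  - apply rsum_nonneg. intros r _. apply Rlt_le, Rinv_0_lt_compat, lt_0_INR. lia.
  - rewrite <- rsum_const. apply rsum_le. intros r _.
    apply Rinv_le_contravar. apply lt_0_INR; lia. apply le_INR. lia.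
Qed.

Lemma gsum_lim m : is_lim_seq (fun N => gsum m (S N)) 0.
Proof.
  apply (is_lim_seq_le_le (fun _ => 0) _ (fun N => INR m * / INR (S N))).
  - intros N. destruct (gsum_bound m (S N)) as [A B]. split; auto.
    eapply Rle_trans; [exact B|]. apply Rmult_le_compat_l. apply pos_INR.
    apply Rinv_le_contravar. apply lt_0_INR; lia. apply le_INR; lia.
  - apply is_lim_seq_const.
  - assert (Hl := is_lim_seq_scal_l _ (INR m) _ lim_inv_S). simpl in Hl.
    rewrite Rmult_0_r in Hl. exact Hl.
Qed.

Definition b2 (m k : nat) : R := / INR (2 * k + 2) - / INR (2 * k + 2 * m + 2).

Lemma b2_eq m k : b2 m k = / 2 * (gsum m k - gsum m (S k)).
Proof.
  rewrite gsum_diff. unfold b2.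
  replace (INR (2 * k + 2)) with (2 * INR (k + 1)) by (rewrite !plus_INR, mult_INR; simpl; ring).
  replace (INR (2 * k + 2 * m + 2)) with (2 * INR (k + m + 1)) by (rewrite !plus_INR, !mult_INR; simpl; ring).
  assert (0 < INR (k + 1)) by (apply lt_0_INR; lia).
  assert (0 < INR (k + m + 1)) by (apply lt_0_INR; lia).
  field. lra.
Qed.

Lemma is_series_b2 m : is_series (b2 m) (H m / 2).
Proof.
  assert (Hm : is_lim_seq (sum_n (b2 m)) (H m / 2)).
  { apply (is_lim_seq_ext (fun N => / 2 * (H m - gsum m (S N)))).
    - intros N. rewrite rsum_sum_n.
      rewrite (rsum_ext _ _ (fun k => / 2 * (gsum m k - gsum m (S k)))).
      rewrite rsum_scal, rsum_tele, gsum_0. auto.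
      intros; apply b2_eq.
    - replace (H m / 2) with (/ 2 * (H m - 0)) by field.
      apply (is_lim_seq_scal_l _ (/ 2) (H m - 0)).
      apply is_lim_seq_minus'. apply is_lim_seq_const. apply gsum_lim. }
  exact Hm.
Qed.

Lemma inner_ln m : is_series (fun k => / xk k - / yk k m) (ln 2 + H m / 2).
Proof.
  apply (is_series_ext (fun k => plus (b1 k) (b2 m k))).
  - intros k. unfold b1, b2, xk, yk, plus. simpl. ring.
  - apply (is_series_plus b1 (b2 m) (ln 2) (H m / 2) is_series_b1 (is_series_b2 m)).
Qed.

Lemma Hser_partial N : rsum N (fun m => H m * / ((INR m + 1) * (INR m + 2))) + H N * / (INR N + 1)
  = 1 - / (INR N + 1).
Proof.
  induction N.
  - simpl. rewrite H_0. field.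
  - rewrite rsum_S, H_S. rewrite S_INR.
    assert (HN0 : 0 <= INR N) by apply pos_INR.
    replace (rsum N (fun m => H m * / ((INR m + 1) * (INR m + 2))) +
      H N * / ((INR N + 1) * (INR N + 2)) + (H N + / (INR N + 1)) * / (INR N + 1 + 1))
    with ((rsum N (fun m => H m * / ((INR m + 1) * (INR m + 2))) + H N * / (INR N + 1))
      + / ((INR N + 1) * (INR N + 2))) by (field; lra).
    rewrite IHN. field. lra.
Qed.

Lemma ex_Hser a : (2 <= a)%nat -> ex_series (fun m => H m * / xk m ^ a).
Proof.
  intros Ha.
  assert (E : ex_series (fun m => H m * / ((INR m + 1) * (INR m + 2)))).
  { apply (ex_series_bound _ 1).
    - intros m. apply Rmult_le_pos. apply H_nonneg.
      pose proof (pos_INR m). apply Rlt_le, Rinv_0_lt_compat. nra.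
    - intros N. pose proof (Hser_partial N) as HP1. pose proof (H_nonneg N) as HP2.
      assert (HP4 : 0 < / (INR N + 1)) by (apply Rinv_0_lt_compat; pose proof (pos_INR N); lra).
      assert (HP5 : 0 <= H N * / (INR N + 1)) by (apply Rmult_le_pos; lra). lra. }
  apply (ex_series_le_R _ (fun m => 2 * (H m * / ((INR m + 1) * (INR m + 2))))).
  - intros m. split. apply Rmult_le_pos. apply H_nonneg. apply inv_pow_nonneg, xk_pos.
    assert (HP6 : / xk m ^ a <= 2 * / ((INR m + 1) * (INR m + 2))).
    { eapply Rle_trans. apply inv_pow_le; [apply xk_ge1|exact Ha]. apply xk2_bound. }
    pose proof (H_nonneg m) as HP3. nra.
  - apply (ex_series_scal_l 2 _ E).
Qed.

Definition Fs (s t : nat) (k m : nat) : R := / xk k ^ t * / yk k m ^ s.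

Lemma Fs_nonneg s t k m : 0 <= Fs s t k m.
Proof. unfold Fs. apply Rmult_le_pos; apply inv_pow_nonneg. apply xk_pos. apply yk_pos. Qed.

Lemma yk_ge1 k m : 1 <= yk k m.
Proof. rewrite yk_eq. pose proof (xk_ge1 k). pose proof (xk_pos m). lra. Qed.

Lemma Fs_point s t k m : (2 <= s)%nat -> (1 <= t)%nat ->
  Fs s t k m <= / xk k * (/ 2 * (/ INR (k + m + 1) - / INR (k + S m + 1))).
Proof.
  intros Hs Ht. unfold Fs.
  assert (Hx1 : / xk k ^ t <= / xk k ^ 1) by (apply inv_pow_le; auto; apply xk_ge1).
  assert (Hy1 : / yk k m ^ s <= / yk k m ^ 2) by (apply inv_pow_le; auto; apply yk_ge1).
  assert (Ea : yk k m = 2 * INR (k + m + 1)).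
  { unfold yk. rewrite !plus_INR, !mult_INR. simpl. ring. }
  assert (Eb : INR (k + S m + 1) = INR (k + m + 1) + 1).
  { replace (k + S m + 1)%nat with (S (k + m + 1)) by lia. apply S_INR. }
  set (a := INR (k + m + 1)) in *.
  assert (Ha : 1 <= a) by (unfold a; apply (le_INR 1); lia).
  assert (Hy2 : / yk k m ^ 2 <= / 2 * (/ a - / (a + 1))).
  { rewrite Ea. replace (/ 2 * (/ a - / (a + 1))) with (/ (2 * a * (a + 1))) by (field; lra).
    apply Rinv_le_contravar. nra. simpl. nra. }
  rewrite Eb. simpl pow in Hx1. rewrite Rmult_1_r in Hx1.
  apply Rmult_le_compat. apply inv_pow_nonneg, xk_pos. apply inv_pow_nonneg, yk_pos.
  auto. lra.
Qed.

Lemma Fs_summable s t : (2 <= s)%nat -> (1 <= t)%nat -> summable (Fs s t).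
Proof.
  intros Hs Ht.
  apply (summable_bound _ (fun k => / xk k * (/ 2 * / INR (k + 1)))).
  - apply Fs_nonneg.
  - intros k N. eapply Rle_trans. apply rsum_le. intros m _. apply (Fs_point s t k m Hs Ht).
    rewrite rsum_scal, rsum_scal.
    rewrite (rsum_tele N (fun m => / INR (k + m + 1))).
    rewrite Nat.add_0_r.
    assert (0 <= / INR (k + N + 1)) by (apply Rlt_le, Rinv_0_lt_compat, lt_0_INR; lia).
    assert (0 < / xk k) by (apply Rinv_0_lt_compat, xk_pos).
    apply Rmult_le_compat_l. lra. lra.
  - apply (ex_series_le_R _ (fun n => / ((INR n + 1) * (INR n + 2)))); [|apply ex_tele12].
    intros k. assert (0 < xk k) by apply xk_pos. assert (0 < INR (k + 1)) by (apply lt_0_INR; lia).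
    split. apply Rmult_le_pos; [|apply Rmult_le_pos]; try lra; apply Rlt_le, Rinv_0_lt_compat; lra.
    replace (/ xk k * (/ 2 * / INR (k + 1))) with (/ (xk k * 2 * INR (k + 1))) by (field; lra).
    apply Rinv_le_contravar. pose proof (pos_INR k). nra.
    unfold xk. rewrite !plus_INR, !mult_INR. simpl. pose proof (pos_INR k). nra.
Qed.

Lemma Series_split (a : nat -> R) N : ex_series (fun j => a (N + j)%nat) ->
  ex_series a /\ Series a = rsum N a + Series (fun j => a (N + j)%nat).
Proof.
  intros He. assert (Ea : ex_series a) by (apply (ex_series_incr_n a N); auto).
  split; auto. destruct N.
  - simpl. rewrite Rplus_0_l. apply Series_ext. intros; reflexivity.
  - rewrite (Series_incr_n a (S N)) by (auto; lia). simpl pred.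
    rewrite <- sum_n_Reals, rsum_sum_n. auto.
Qed.

Lemma Series_zero : Series (fun _ : nat => 0) = 0.
Proof. apply is_series_unique, is_series_zero. Qed.

Lemma Series_finite (a : nat -> R) N : (forall j, (N <= j)%nat -> a j = 0) -> Series a = rsum N a.
Proof.
  intros Hz. destruct (Series_split a N) as [_ E].
  - apply (ex_series_ext (fun _ => 0)). intros j; rewrite Hz; auto; lia.
    exists 0; apply is_series_zero.
  - rewrite E. rewrite (Series_ext _ (fun _ => 0)). rewrite Series_zero. ring.
    intros j; apply Hz; lia.
Qed.

Lemma sigma_DS s t : (2 <= s)%nat -> (1 <= t)%nat -> sigmaST s t = 2 ^ s * DS (Fs s t).
Proof.
  intros Hs Ht.
  destruct (Fs_summable s t Hs Ht) as [F1 F2].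
  set (T := fun k n => if (k <=? n)%nat then Fs s t k (n - k) else 0).
  assert (Trow : forall k, ex_series (T k) /\ Series (T k) = Series (Fs s t k)).
  { intros k. destruct (Series_split (T k) k) as [A B].
    - apply (ex_series_ext (Fs s t k)); auto. intros j. unfold T.
      replace (k <=? k + j)%nat with true by (symmetry; apply Nat.leb_le; lia).
      f_equal. lia.
    - split; auto. rewrite B. rewrite (rsum_zero k (T k)).
      rewrite Rplus_0_l. apply Series_ext. intros j. unfold T.
      replace (k <=? k + j)%nat with true by (symmetry; apply Nat.leb_le; lia).
      f_equal. lia.
      intros j Hj. unfold T. replace (k <=? j)%nat with false by (symmetry; apply Nat.leb_gt; lia). auto. }
  assert (TS : summable T).
  { split. intros k; apply Trow.
    apply (ex_series_ext (fun k => Series (Fs s t k))); auto. intros k. symmetry; apply Trow. }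
  assert (TD : DS T = DS (Fs s t)).
  { unfold DS. apply Series_ext. intros k; apply Trow. }
  assert (Tpos : forall k n, 0 <= T k n).
  { intros k n. unfold T. destruct (k <=? n)%nat. apply Fs_nonneg. lra. }
  destruct (tonelli T Tpos TS) as [_ TT].
  rewrite <- TD, <- TT. unfold DS. rewrite <- Series_scal_l.
  unfold sigmaST. apply Series_ext. intros n.
  rewrite (Series_finite _ (S n)).
  2:{ intros j Hj. unfold T. replace (j <=? n)%nat with false by (symmetry; apply Nat.leb_gt; lia). auto. }
  unfold Sodd. rewrite Nat.add_1_r. unfold Rdiv. rewrite Rmult_comm, <- rsum_scal, <- rsum_scal.
  apply rsum_ext. intros k Hk. unfold T.
  replace (k <=? n)%nat with true by (symmetry; apply Nat.leb_le; lia).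
  unfold Fs, xk, yk.
  replace (INR (2 * k + 2 * (n - k) + 2)) with (2 * INR (S n)).
  2:{ replace (2 * k + 2 * (n - k) + 2)%nat with (2 * S n)%nat by lia. rewrite mult_INR. auto. }
  rewrite Rpow_mult_distr, Rinv_mult.
  assert (0 < 2 ^ s) by (apply pow_lt; lra).
  assert (0 < INR (S n) ^ s) by (apply pow_lt, lt_0_INR; lia).
  assert (0 < INR (2 * k + 1) ^ t) by (apply pow_lt, lt_0_INR; lia).
  field. repeat split; lra.
Qed.

Lemma Gpiece p q : (2 <= p)%nat -> (2 <= q)%nat ->
  summable (fun k m => / xk m ^ p * / xk k ^ q) /\
  DS (fun k m => / xk m ^ p * / xk k ^ q) = lambda p * lambda q.
Proof.
  intros Hp Hq.
  destruct (summable_prod (fun k => / xk k ^ q) (fun m => / xk m ^ p) (ex_lam q Hq) (ex_lam p Hp)) as [S1 S2].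
  destruct (summable_ext _ (fun k m => / xk m ^ p * / xk k ^ q) (fun k m => Rmult_comm _ _) S1) as [S3 S4].
  split; auto. rewrite S4, S2. rewrite !lambda_xk. ring.
Qed.

Lemma Hpiece s t : (2 <= s)%nat -> (1 <= t)%nat ->
  summable (fun k m => / xk m ^ t * / yk k m ^ s) /\
  DS (fun k m => / xk m ^ t * / yk k m ^ s) = sigmaST s t / 2 ^ s.
Proof.
  intros Hs Ht.
  destruct (tonelli (Fs s t) (Fs_nonneg s t) (Fs_summable s t Hs Ht)) as [S1 S2].
  destruct (summable_ext _ (fun k m => / xk m ^ t * / yk k m ^ s)
     (fun k m => f_equal (fun y => / xk m ^ t * / y ^ s) (yk_sym m k)) S1) as [S3 S4].
  split; auto. rewrite S4. etransitivity; [exact S2|]. rewrite (sigma_DS s t Hs Ht).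
  assert (0 < 2 ^ s) by (apply pow_lt; lra). field. lra.
Qed.

Lemma Dpiece a : (2 <= a)%nat ->
  summable (fun k m => / xk m ^ a * (/ xk k - / yk k m)) /\
  DS (fun k m => / xk m ^ a * (/ xk k - / yk k m)) =
    ln 2 * lambda a + / 2 * Series (fun m => H m * / xk m ^ a).
Proof.
  intros Ha.
  set (Q := fun m k => / xk m ^ a * (/ xk k - / yk k m)).
  assert (Qrow : forall m, is_series (Q m) (/ xk m ^ a * (ln 2 + H m / 2))).
  { intros m. apply (is_series_scal_l (/ xk m ^ a) _ _ (inner_ln m)). }
  assert (Qpos : forall m k, 0 <= Q m k).
  { intros m k. unfold Q. apply Rmult_le_pos. apply inv_pow_nonneg, xk_pos.
    rewrite yk_eq. pose proof (xk_pos k). pose proof (xk_pos m).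
    assert (/ (xk k + xk m) <= / xk k) by (apply Rinv_le_contravar; lra). lra. }
  assert (Eo : ex_series (fun m => ln 2 * / xk m ^ a + / 2 * (H m * / xk m ^ a))).
  { apply (ex_series_plus (fun m => ln 2 * / xk m ^ a) (fun m => / 2 * (H m * / xk m ^ a))).
    apply (ex_series_scal_l (ln 2) _ (ex_lam a Ha)).
    apply (ex_series_scal_l (/ 2) _ (ex_Hser a Ha)). }
  assert (Qser : forall m, Series (Q m) = ln 2 * / xk m ^ a + / 2 * (H m * / xk m ^ a)).
  { intros m. rewrite (is_series_unique _ _ (Qrow m)). unfold Rdiv. ring. }
  assert (QS : summable Q).
  { split. intros m; eexists; apply Qrow.
    apply (ex_series_ext _ _ (fun m => eq_sym (Qser m)) Eo). }
  destruct (tonelli Q Qpos QS) as [S1 S2].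
  split; auto. change (DS (fun k m => Q m k) = ln 2 * lambda a + / 2 * Series (fun m => H m * / xk m ^ a)). rewrite S2. unfold DS. rewrite (Series_ext _ _ Qser).
  rewrite Series_plus. rewrite !Series_scal_l. auto.
  apply (ex_series_scal_l (ln 2) _ (ex_lam a Ha)).
  apply (ex_series_scal_l (/ 2) _ (ex_Hser a Ha)).
Qed.

Lemma sq_m1 n : (-1) ^ n * (-1) ^ n = 1.
Proof.
  induction n. simpl; ring.
  simpl. replace (-1 * (-1) ^ n * (-1 * (-1) ^ n)) with ((-1) ^ n * (-1) ^ n) by ring. auto.
Qed.

Lemma decomp s1 t1 k m :
  Fs (S s1) (S t1) k m =
    rsum t1 (fun j => ((-1) ^ j * cb (S s1 + j - 1) j) * ((/ xk m) ^ (S s1 + j) * (/ xk k) ^ (S t1 - j)))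
  + rsum s1 (fun i => ((-1) ^ S t1 * cb (S t1 + i - 1) i) * ((/ xk m) ^ (S t1 + i) * (/ yk k m) ^ (S s1 - i)))
  + ((-1) ^ t1 * cb (s1 + t1) t1) * ((/ xk m) ^ (S (s1 + t1)) * (/ xk k - / yk k m)).
Proof.
  set (u := / xk k). set (v := / yk k m). set (e := / xk m).
  assert (Huv : u * v = e * (u - v)).
  { unfold u, v, e. rewrite yk_eq. pose proof (xk_pos k). pose proof (xk_pos m).
    field. lra. }
  unfold Fs. rewrite <- !pow_inv. fold u v.
  rewrite (PF_ind u v e Huv (S t1 + S s1) (S t1) (S s1) eq_refl ltac:(lia)).
  unfold PA, PB. rewrite !rsum_S.
  rewrite Rmult_plus_distr_l, <- rsum_scal.
  replace (S t1 - t1)%nat with 1%nat by lia. replace (S s1 - s1)%nat with 1%nat by lia.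
  replace (S s1 + t1 - 1)%nat with (s1 + t1)%nat by lia.
  replace (S t1 + s1 - 1)%nat with (s1 + t1)%nat by lia.
  replace (S s1 + t1)%nat with (S (s1 + t1)) by lia.
  replace (S t1 + s1)%nat with (S (s1 + t1)) by lia.
  assert (Ecb : cb (s1 + t1) s1 = cb (s1 + t1) t1).
  { rewrite !cb_C by lia. rewrite pascal_step1 by lia. f_equal. lia. }
  rewrite Ecb.
  rewrite (rsum_ext t1 (fun j => (-1) ^ j * cb (S s1 + j - 1) j * e ^ (S s1 + j) * u ^ (S t1 - j))
     (fun j => ((-1) ^ j * cb (S s1 + j - 1) j) * (e ^ (S s1 + j) * u ^ (S t1 - j)))) by (intros; ring).
  rewrite (rsum_ext s1 (fun i => (-1) ^ S t1 * (cb (S t1 + i - 1) i * e ^ (S t1 + i) * v ^ (S s1 - i)))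
     (fun i => ((-1) ^ S t1 * cb (S t1 + i - 1) i) * (e ^ (S t1 + i) * v ^ (S s1 - i)))) by (intros; ring).
  simpl (_ ^ 1). simpl ((-1) ^ S t1).
  generalize (rsum t1 (fun j => (-1) ^ j * cb (S s1 + j - 1) j * (e ^ (S s1 + j) * u ^ (S t1 - j)))).
  generalize (rsum s1 (fun i => -1 * (-1) ^ t1 * cb (S t1 + i - 1) i * (e ^ (S t1 + i) * v ^ (S s1 - i)))).
  generalize ((-1) ^ t1) (e ^ S (s1 + t1)) (cb (s1 + t1) t1). intros. ring.
Qed.

Lemma alg1 r p z q w : r * r = 1 -> 0 < z -> r * (p * z * (r * q * (w / z))) = p * q * w.
Proof.
  intros Hr Hz. unfold Rdiv.
  replace (r * (p * z * (r * q * (w * / z)))) with ((r * r) * (z * / z) * (p * q * w)) by ring.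
  rewrite Hr, Rinv_r by lra. ring.
Qed.

Lemma alg2 (r P X Y c l L S : R) : r * r = 1 ->
  (-1 * r) * (2 * P) * X + Y + (-1 * r) * ((2 * P) * (r * c * (l * L + / 2 * S))) =
  Y + (-1 * r) * (2 * P) * X - P * c * S - (2 * P) * c * L * l.
Proof.
  intros Hr.
  replace ((-1 * r) * ((2 * P) * (r * c * (l * L + / 2 * S)))) with
    (- (r * r) * (2 * P * c * l * L + P * c * S)) by field.
  rewrite Hr. ring.
Qed.

Theorem mainTheorem10 (s t : nat) (hs : (2 <= s)%nat) (ht : (1 <= t)%nat) :
  (-1) ^ t * sigmaST s t =
    rsum (s - 1) (fun i => 2 ^ i * Binomial.C (t + i - 1) i * sigmaST (s - i) (t + i))
  + (-1) ^ t * 2 ^ s *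
      rsum (t - 1) (fun j => (-1) ^ j * Binomial.C (s + j - 1) j
                              * lambda (s + j) * lambda (t - j))
  - 2 ^ (s - 1) * Binomial.C (s + t - 2) (s - 1) *
      Series (fun n => H (n + 1) / (INR (2 * (n + 1) + 1)) ^ (s + t - 1))
  - 2 ^ s * Binomial.C (s + t - 2) (s - 1) * lambda (s + t - 1) * ln 2.
Proof.
  destruct s as [|s1]; [lia|]. destruct t as [|t1]; [lia|].
  replace (S s1 - 1)%nat with s1 by lia. replace (S t1 - 1)%nat with t1 by lia.
  replace (S s1 + S t1 - 2)%nat with (s1 + t1)%nat by lia.
  replace (S s1 + S t1 - 1)%nat with (S (s1 + t1)) by lia.
  set (a := S (s1 + t1)).
  set (FA := fun j k m => ((-1) ^ j * cb (S s1 + j - 1) j) * ((/ xk m) ^ (S s1 + j) * (/ xk k) ^ (S t1 - j))).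
  set (FB := fun i k m => ((-1) ^ S t1 * cb (S t1 + i - 1) i) * ((/ xk m) ^ (S t1 + i) * (/ yk k m) ^ (S s1 - i))).
  set (FC := fun k m => ((-1) ^ t1 * cb (s1 + t1) t1) * ((/ xk m) ^ a * (/ xk k - / yk k m))).
  assert (PA' : forall j, (j < t1)%nat -> summable (FA j) /\
     DS (FA j) = ((-1) ^ j * cb (S s1 + j - 1) j) * (lambda (S s1 + j) * lambda (S t1 - j))).
  { intros j Hj. destruct (Gpiece (S s1 + j) (S t1 - j) ltac:(lia) ltac:(lia)) as [G1 G2].
    destruct (summable_scal ((-1) ^ j * cb (S s1 + j - 1) j) _ G1) as [G3 G4].
    assert (G7 : forall k m, (fun k m => ((-1) ^ j * cb (S s1 + j - 1) j) * (/ xk m ^ (S s1 + j) * / xk k ^ (S t1 - j))) k m = FA j k m).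
    { intros k m. unfold FA. rewrite !pow_inv. reflexivity. }
    destruct (summable_ext _ _ G7 G3) as [G5 G6].
    split; auto. rewrite G6, G4, G2. auto. }
  assert (PB' : forall i, (i < s1)%nat -> summable (FB i) /\
     DS (FB i) = ((-1) ^ S t1 * cb (S t1 + i - 1) i) * (sigmaST (S s1 - i) (S t1 + i) / 2 ^ (S s1 - i))).
  { intros i Hi. destruct (Hpiece (S s1 - i) (S t1 + i) ltac:(lia) ltac:(lia)) as [G1 G2].
    destruct (summable_scal ((-1) ^ S t1 * cb (S t1 + i - 1) i) _ G1) as [G3 G4].
    assert (G7 : forall k m, (fun k m => ((-1) ^ S t1 * cb (S t1 + i - 1) i) * (/ xk m ^ (S t1 + i) * / yk k m ^ (S s1 - i))) k m = FB i k m).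
    { intros k m. unfold FB. rewrite !pow_inv. reflexivity. }
    destruct (summable_ext _ _ G7 G3) as [G5 G6].
    split; auto. rewrite G6, G4, G2. auto. }
  assert (PC' : summable FC /\ DS FC = ((-1) ^ t1 * cb (s1 + t1) t1) *
      (ln 2 * lambda a + / 2 * Series (fun m => H m * / xk m ^ a))).
  { destruct (Dpiece a ltac:(unfold a; lia)) as [G1 G2].
    destruct (summable_scal ((-1) ^ t1 * cb (s1 + t1) t1) _ G1) as [G3 G4].
    assert (G7 : forall k m, (fun k m => ((-1) ^ t1 * cb (s1 + t1) t1) * (/ xk m ^ a * (/ xk k - / yk k m))) k m = FC k m).
    { intros k m. unfold FC. rewrite !pow_inv. reflexivity. }
    destruct (summable_ext _ _ G7 G3) as [G5 G6].
    split; auto. rewrite G6, G4, G2. auto. }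
  destruct (summable_rsum FA t1 (fun j Hj => proj1 (PA' j Hj))) as [SA DA].
  destruct (summable_rsum FB s1 (fun i Hi => proj1 (PB' i Hi))) as [SB DB].
  destruct PC' as [SC DC].
  destruct (summable_plus _ _ SA SB) as [SAB DAB].
  destruct (summable_plus _ _ SAB SC) as [SABC DABC].
  assert (Edec : DS (Fs (S s1) (S t1)) =
     rsum t1 (fun j => DS (FA j)) + rsum s1 (fun i => DS (FB i)) + DS FC).
  { rewrite <- DA, <- DB, <- DAB, <- DABC. unfold DS. apply Series_ext. intros k.
    apply Series_ext. intros m. rewrite decomp. reflexivity. }
  rewrite (sigma_DS (S s1) (S t1) hs ht), Edec, DC.
  rewrite (rsum_ext _ _ _ (fun j Hj => proj2 (PA' j Hj))).
  rewrite (rsum_ext _ _ _ (fun i Hi => proj2 (PB' i Hi))).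
  assert (EH : Series (fun m => H m * / xk m ^ a) =
     Series (fun n => H (n + 1) / INR (2 * (n + 1) + 1) ^ a)).
  { rewrite Series_incr_1 by (apply ex_Hser; unfold a; lia).
    rewrite H_0, Rmult_0_l, Rplus_0_l. apply Series_ext. intros n.
    rewrite Nat.add_1_r. reflexivity. }
  rewrite EH.
  assert (Ecb : cb (s1 + t1) t1 = Binomial.C (s1 + t1) s1).
  { rewrite cb_C by lia. rewrite pascal_step1 by lia. f_equal. lia. }
  rewrite Ecb.
  assert (E1 : (-1) ^ S t1 * (2 ^ S s1 * rsum t1 (fun j => (-1) ^ j * cb (S s1 + j - 1) j *
        (lambda (S s1 + j) * lambda (S t1 - j)))) =
      (-1) ^ S t1 * 2 ^ S s1 * rsum t1 (fun j => (-1) ^ j * Binomial.C (S s1 + j - 1) j *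
        lambda (S s1 + j) * lambda (S t1 - j))).
  { rewrite Rmult_assoc. f_equal. f_equal. apply rsum_ext. intros j Hj.
    rewrite cb_C by lia. ring. }
  assert (E2 : (-1) ^ S t1 * (2 ^ S s1 * rsum s1 (fun i => (-1) ^ S t1 * cb (S t1 + i - 1) i *
        (sigmaST (S s1 - i) (S t1 + i) / 2 ^ (S s1 - i)))) =
      rsum s1 (fun i => 2 ^ i * Binomial.C (S t1 + i - 1) i * sigmaST (S s1 - i) (S t1 + i))).
  { rewrite <- rsum_scal, <- rsum_scal. apply rsum_ext. intros i Hi.
    rewrite cb_C by lia.
    assert (Ep : 2 ^ S s1 = 2 ^ i * 2 ^ (S s1 - i)) by (rewrite <- pow_add; f_equal; lia).
    rewrite Ep. clear Ep. assert (Hz0 : 0 < 2 ^ (S s1 - i)) by (apply pow_lt; lra).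
    pose proof (sq_m1 (S t1)) as Hsq.
    apply alg1; auto. }
  rewrite Rmult_plus_distr_l, Rmult_plus_distr_l, Rmult_plus_distr_l, Rmult_plus_distr_l.
  rewrite E1, E2.
  replace ((-1) ^ S t1) with (-1 * (-1) ^ t1) by reflexivity.
  replace (2 ^ S s1) with (2 * 2 ^ s1) by reflexivity.
  apply alg2. apply sq_m1.
Qed.
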